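(* Let $\tau,t\in\mathbb{R}$ and let $\beta_n=\beta_n(\tau,t)$ be the recurrence coefficients of the monic orthogonal polynomials for the weight $\omega(x;\tau,t)=\exp(-x^6+\tau x^4+tx^2)$ on $\mathbb{R}$. Then for $n\ge1$ \begin{align*} 6\beta_n\big(&\beta_{n-2}\beta_{n-1}+\beta_{n-1}^2+2\beta_{n-1}\beta_n+\beta_{n-1}\beta_{n+1}+\beta_n^2+2\beta_n\beta_{n+1}+\beta_{n+1}^2+\beta_{n+1}\beta_{n+2}\big)\\ &-4\tau\beta_n(\beta_{n-1}+\beta_n+\beta_{n+1})-2t\beta_n=n. \end{align*}
   Context: The monic orthogonal polynomials satisfy $P_{n+1}(x)=xP_n(x)-\beta_nP_{n-1}(x)$ with $P_{-1}=0$, $P_0=1$, where $\beta_n>0$ for $n\ge1$. The convention $\beta_0=\beta_{-1}=0$ is used. *)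

(* Defs.v *)
From HB Require Import structures.
From mathcomp Require Import all_boot all_order all_algebra.
From mathcomp Require Import all_classical all_reals all_analysis.
Set Implicit Arguments. Unset Strict Implicit. Unset Printing Implicit Defensive.
Import Order.TTheory GRing.Theory Num.Theory.
Local Open Scope ring_scope.
Local Open Scope classical_set_scope.

Definition sextic_weight {R : realType} (tau t : R) (x : R) : R :=
  expR (- x ^+ 6 + tau * x ^+ 4 + t * x ^+ 2).

Definition wprod {R : realType} (tau t : R) (p q : {poly R}) : \bar R :=
  (\int[lebesgue_measure]_(x in [set: R]) (p.[x] * q.[x] * sextic_weight tau t x)%:E)%E.

Definition orthogonal_family {R : realType} (tau t : R) (P : nat -> {poly R}) : Prop :=
  forall m n : nat, m <> n -> wprod tau t (P m) (P n) = 0%E.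

(* Main.v *)
Require Import Defs.
From HB Require Import structures.
From mathcomp Require Import all_boot all_order all_algebra.
From mathcomp Require Import all_classical all_reals all_analysis.
From mathcomp Require Import measurable_realfun.
From mathcomp Require Import ring lra zify.
Import Order.TTheory GRing.Theory Num.Theory.
Import numFieldNormedType.Exports.
Local Open Scope ring_scope.

Lemma neqS1 k : (k.+1 == k) = false. Proof. lia. Qed.
Lemma neqS1' k : (k == k.+1) = false. Proof. lia. Qed.
Lemma neqS2 k : (k.+2 == k) = false. Proof. lia. Qed.
Lemma neqS2' k : (k == k.+2) = false. Proof. lia. Qed.
Lemma neqS3 k : (k.+3 == k) = false. Proof. lia. Qed.
Lemma neqS3' k : (k == k.+3) = false. Proof. lia. Qed.
Lemma neqS4 k : (k.+4 == k) = false. Proof. lia. Qed.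
Lemma neqS4' k : (k == k.+4) = false. Proof. lia. Qed.
Lemma neqS5 k : (k.+1.+4 == k) = false. Proof. lia. Qed.
Lemma neqS5' k : (k == k.+1.+4) = false. Proof. lia. Qed.
Lemma neqS6 k : (k.+2.+4 == k) = false. Proof. lia. Qed.
Lemma neqS6' k : (k == k.+2.+4) = false. Proof. lia. Qed.

Section Alg.
Variable R : fieldType.
Variables (tau t : R) (L : {poly R} -> R) (P : nat -> {poly R}) (beta : nat -> R).
Hypothesis LD : forall p q, L (p + q) = L p + L q.
Hypothesis LZ : forall c p, L (c *: p) = c * L p.
Hypothesis P0 : P 0%N = 1.
Hypothesis b0 : beta 0%N = 0.
Hypothesis Prec : forall n : nat, P n.+1 = 'X * P n - beta n *: P n.-1.
Hypothesis bnz : forall n, (1 <= n)%N -> beta n != 0.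
Hypothesis orth : forall m n : nat, m <> n -> L (P m * P n) = 0.
Hypothesis L1 : L 1 != 0.
Definition Qp : {poly R} := (- 6%:R) *: 'X^5 + (4 * tau) *: 'X^3 + (2 * t) *: 'X.
Hypothesis LQ : forall p, L (p^`() + p * Qp) = 0.

Lemma L0 : L 0 = 0.
Proof. by rewrite -(scale0r 0) LZ mul0r. Qed.

Lemma LN p : L (- p) = - L p.
Proof. by rewrite -scaleN1r LZ mulN1r. Qed.

Lemma LB p q : L (p - q) = L p - L q.
Proof. by rewrite LD LN. Qed.

Lemma XP a : 'X * P a = P a.+1 + beta a *: P a.-1.
Proof. by rewrite Prec subrK. Qed.

Definition G j a b := L ('X^j * (P a * P b)).

Lemma Gstep j a b : G j.+1 a b = G j a.+1 b + beta a * G j a.-1 b.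
Proof.
rewrite /G.
have -> : 'X^(j.+1) * (P a * P b) = 'X^j * (('X * P a) * P b) by rewrite exprS; ring.
rewrite XP.
by rewrite mulrDl mulrDr LD -scalerAl -scalerAr LZ.
Qed.

Lemma G0 a b : G 0 a b = L (P a * P b).
Proof. by rewrite /G expr0 mul1r. Qed.

Lemma Gsym j a b : G j a b = G j b a.
Proof. by rewrite /G [P a * _]mulrC. Qed.

Lemma PcoefAux n : forall m, (m <= n)%N -> (P m)`_m = 1 /\ forall j, (m < j)%N -> (P m)`_j = 0.
Proof.
elim: n => [|n IH] m.
  rewrite leqn0 => /eqP ->; rewrite P0 coef1; split => // -[|j]//= _; by rewrite coef1.
rewrite leq_eqVlt => /orP[/eqP ->|]; last by rewrite ltnS; exact: IH.
have [c1 c2] := IH n (leqnn n).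
rewrite Prec coefB coefXM /= c1 coefZ.
case: n IH c1 c2 => [|n] IH c1 c2.
  rewrite b0 mul0r subr0; split => // -[|j]//= lt.
  by rewrite coefB coefXM /= coefZ mul0r subr0 c2.
have [d1 d2] := IH n (leqnSn _).
rewrite d2 // mulr0 subr0; split => // -[|j]// lt.
rewrite coefB coefXM /= coefZ c2 // d2 ?mulr0 ?subr0 //.
by apply: (ltn_trans _ lt).
Qed.

Lemma Pcoef n : (P n)`_n = 1 /\ forall j, (n < j)%N -> (P n)`_j = 0.
Proof. exact: PcoefAux. Qed.

Lemma Psize n : (size (P n) <= n.+1)%N.
Proof. apply/leq_sizeP => j; exact: (Pcoef n).2. Qed.

Lemma orth_low d (r : {poly R}) : (size r <= d)%N -> forall m, (d <= m)%N -> L (P m * r) = 0.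
Proof.
elim: d r => [|d IH] r.
  by rewrite size_poly_leq0 => /eqP -> m _; rewrite mulr0 L0.
move=> sr m dm.
have -> : r = r`_d *: P d + (r - r`_d *: P d) by rewrite addrC subrK.
rewrite mulrDr LD -scalerAr LZ orth ?mulr0 ?add0r; last first.
  by move=> E; rewrite E ltnn in dm.
apply: IH; last exact: ltnW.
apply/leq_sizeP => j dj; rewrite coefB coefZ.
move: dj; rewrite leq_eqVlt => /orP[/eqP <-|dj].
  by rewrite (Pcoef d).1 mulr1 subrr.
by rewrite (Pcoef d).2 // mulr0 subr0; move/leq_sizeP: sr; apply.
Qed.

Lemma orth_diag d (r : {poly R}) : (size r <= d.+1)%N -> L (P d * r) = r`_d * L (P d * P d).
Proof.
move=> sr.
have -> : r = r`_d *: P d + (r - r`_d *: P d) by rewrite addrC subrK.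
rewrite mulrDr LD -scalerAr LZ (@orth_low d) ?addr0 //.
  by rewrite coefD coefZ (Pcoef d).1 mulr1 coefB coefZ (Pcoef d).1 mulr1 subrr addr0.
apply/leq_sizeP => j dj; rewrite coefB coefZ.
move: dj; rewrite leq_eqVlt => /orP[/eqP <-|dj].
  by rewrite (Pcoef d).1 mulr1 subrr.
by rewrite (Pcoef d).2 // mulr0 subr0; move/leq_sizeP: sr; apply.
Qed.

Definition h a := L (P a * P a).

Lemma hS a : h a.+1 = beta a.+1 * h a.
Proof.
have ne2 : a.+2 <> a by lia.
have := Gstep 0 a.+1 a; rewrite !G0 /= (orth _ _ ne2) => E.
rewrite /h -(add0r (beta _ * _)) -E.
rewrite Gsym /G expr1 mulrA XP mulrDl LD -scalerAl LZ.
have ne : a.+1 <> a.-1 by lia.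
by rewrite [P a.-1 * _]mulrC (orth _ _ ne) mulr0 addr0.
Qed.

Lemma hnz a : h a != 0.
Proof.
elim: a => [|a IH]; first by rewrite /h P0 mulr1.
by rewrite hS mulf_neq0 // bnz.
Qed.

Lemma LPP a b : L (P a * P b) = (a == b)%:R * h b.
Proof.
case: eqP => [->|ab]; first by rewrite mul1r.
by rewrite orth // mul0r.
Qed.


Lemma LC c p : L (c%:P * p) = c * L p.
Proof. by rewrite mul_polyC LZ. Qed.

Lemma Qexp p : p * Qp = (- 6%:R)%:P * ('X^5 * p) + (4 * tau)%:P * ('X^3 * p) + (2 * t)%:P * ('X^1 * p).
Proof. by rewrite /Qp -!mul_polyC; ring. Qed.

Lemma key k : 0 = k.+1%:R * h k - 6%:R * G 5 k.+1 k + 4 * tau * G 3 k.+1 k + 2 * t * G 1 k.+1 k.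
Proof.
have := LQ (P k.+1 * P k); rewrite derivM Qexp !LD !LC.
have -> : L ((P k.+1)^`() * P k) = k.+1%:R * h k.
  rewrite mulrC orth_diag.
    by rewrite coef_deriv (Pcoef k.+1).1.
  apply/leq_sizeP => j kj; rewrite coef_deriv (Pcoef k.+1).2 ?mul0rn //.
have -> : L (P k.+1 * (P k)^`()) = 0.
  apply: (@orth_low k) => //.
  apply/leq_sizeP => j kj; rewrite coef_deriv (Pcoef k).2 ?mul0rn //.
move=> <-; rewrite /G; ring.
Qed.


Lemma main_alg n : (1 <= n)%N ->
    6 * beta n * (beta (n - 2)%N * beta (n - 1)%N + beta (n - 1)%N ^+ 2
                  + 2 * beta (n - 1)%N * beta n + beta (n - 1)%N * beta n.+1
                  + beta n ^+ 2 + 2 * beta n * beta n.+1 + beta n.+1 ^+ 2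
                  + beta n.+1 * beta n.+2)
    - 4 * tau * beta n * (beta (n - 1)%N + beta n + beta n.+1)
    - 2 * t * beta n = n%:R.
Proof.
case: n => // k _.
have E := key k.
rewrite !Gstep !G0 !LPP in E.
apply: (mulIf (hnz k)).
have -> : (k.+1 - 2 = k.-1)%N by lia.
have -> : (k.+1 - 1 = k)%N by lia.
case: k E => [|[|[|[|k]]]] E /=.
all: move: E; rewrite ?b0 ?eqSS ?eqxx ?neqS1 ?neqS2 ?neqS3 ?neqS4 ?neqS5 ?neqS6 ?neqS1' ?neqS2' ?neqS3' ?neqS4' ?neqS5' ?neqS6' /=.
all: move=> E; apply: subr0_eq; rewrite -oppr0 [X in _ = - X]E; ring.
Qed.

End Alg.

Section Ana.
Local Open Scope classical_set_scope.
Variable R : realType.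
Variables tau t : R.

Definition ep : {poly R} := - 'X^6 + tau *: 'X^4 + t *: 'X^2.

Lemma weightE x : sextic_weight tau t x = expR ep.[x].
Proof. by rewrite /sextic_weight /ep !hornerE. Qed.

Definition W (r : {poly R}) x := r.[x] * expR ep.[x].

Lemma polyA_aux (c u : R) : 2 <= c -> 0 <= u ->
  - u ^+ 3 + c * u ^+ 2 + c * u + 1 <= 4 * c ^+ 3 + 2 * c ^+ 2 + 1.
Proof.
move=> c2 u0.
have [uc|uc] := lerP u (2 * c).
  have h1 : c * u ^+ 2 <= 4 * c ^+ 3.
    have : u ^+ 2 <= (2 * c) ^+ 2 by rewrite ler_pXn2r // ?nnegrE //; lra.
    rewrite exprMn; have : 0 <= c by lra. nra.
  have h2 : c * u <= 2 * c ^+ 2 by rewrite expr2; nra.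
  have : 0 <= u ^+ 3 by rewrite exprn_ge0.
  lra.
have h1 : c * u ^+ 2 + c * u <= u ^+ 3.
  have : 1 <= u by lra.
  rewrite !expr2 exprS expr2; nra.
have : 0 <= c ^+ 3 by rewrite exprn_ge0 //; lra.
have : 0 <= c ^+ 2 by rewrite exprn_ge0 //; lra.
lra.
Qed.

Lemma polyA : exists A, forall x : R, `|x| + ep.[x] + x ^+ 2 <= A.
Proof.
pose c := `|tau| + `|t| + 2.
exists (4 * c ^+ 3 + 2 * c ^+ 2 + 1) => x.
have -> : ep.[x] = - x ^+ 6 + tau * x ^+ 4 + t * x ^+ 2 by rewrite /ep !hornerE.
have c2 : 2 <= c by rewrite /c; have := normr_ge0 tau; have := normr_ge0 t; lra.
have hx : `|x| <= 1 + x ^+ 2.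
  rewrite -(real_normK (num_real x)); have := normr_ge0 x; nra.
have e6 : x ^+ 6 = (x ^+ 2) ^+ 3 by rewrite -exprM.
have e4 : x ^+ 4 = (x ^+ 2) ^+ 2 by rewrite -exprM.
rewrite e6 e4.
have := @polyA_aux c (x ^+ 2) c2 (sqr_ge0 x).
move: hx (sqr_ge0 x); move: (x ^+ 2) => u hx u0.
have ht : t * u <= `|t| * u by rewrite ler_wpM2r // ler_norm.
have htau : tau * u ^+ 2 <= `|tau| * u ^+ 2 by rewrite ler_wpM2r ?sqr_ge0 // ler_norm.
have k1 : `|tau| * u ^+ 2 <= c * u ^+ 2.
  rewrite ler_wpM2r ?sqr_ge0 // /c; have := normr_ge0 t; lra.
have k2 : `|t| * u + 2 * u <= c * u.
  rewrite /c !mulrDl; have : 0 <= `|tau| * u by rewrite mulr_ge0.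
  lra.
lra.
Qed.

Lemma powexp (y : R) D : 0 <= y -> y ^+ D <= D`!%:R * expR y.
Proof.
case: D => [|n] y0.
  by rewrite expr0 fact0 mul1r -expR0 ler_expR.
have := expR_ge1Dxn n y0.
have f0 : 0 < n.+1`!%:R :> R by rewrite ltr0n fact_gt0.
move=> h.
have : y ^+ n.+1 / n.+1`!%:R <= expR y by have := @ler01 R; lra.
by rewrite ler_pdivrMr // mulrC.
Qed.

Lemma mono_bound A : (forall x : R, `|x| + ep.[x] + x ^+ 2 <= A) ->
  forall D x, `|x| ^+ D * expR ep.[x] <= D`!%:R * expR A * gauss_fun x.
Proof.
move=> hA D x.
apply: le_trans (_ : D`!%:R * expR `|x| * expR ep.[x] <= _).
  by rewrite ler_wpM2r ?expR_ge0 // powexp.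
rewrite -mulrA -expRD -mulrA ler_wpM2l ?ler0n // /gauss_fun -expRD ler_expR.
by have := hA x; lra.
Qed.

Lemma poly_bound r : exists C, forall x, `|W r x| <= C * gauss_fun x.
Proof.
have [A hA] := polyA.
pose D := size r.
pose S := \sum_(i < size r) `|r`_i|.
exists (S * (1 + D`!%:R) * expR A) => x.
rewrite /W normrM (ger0_norm (expR_ge0 _)).
have S0 : 0 <= S by rewrite /S sumr_ge0.
have H1 : `|r.[x]| <= S * (1 + `|x| ^+ D).
  rewrite horner_coef; apply: le_trans (ler_norm_sum _ _ _) _.
  rewrite /S mulr_suml; apply: ler_sum => i _.
  rewrite normrM normrX ler_wpM2l //.
  have [x1|x1] := lerP `|x| 1.
    have : `|x| ^+ i <= 1 by rewrite exprn_ile1.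
    have : 0 <= `|x| ^+ D by rewrite exprn_ge0.
    lra.
  have : `|x| ^+ i <= `|x| ^+ D by rewrite ler_weXn2l ?ltW // ltnW.
  have : 0 <= 1 :> R by [].
  lra.
have m0 := @mono_bound A hA 0 x.
have mD := @mono_bound A hA D x.
rewrite expr0 fact0 !mul1r in m0.
have E0 := expR_ge0 ep.[x].
have G0 : 0 <= gauss_fun x := gauss_fun_ge0 x.
apply: le_trans (_ : S * (1 + `|x| ^+ D) * expR ep.[x] <= _).
  by rewrite ler_wpM2r.
rewrite mulrDr mulr1 mulrDl -mulrA.
have -> : S * (1 + D`!%:R) * expR A * gauss_fun x = S * (expR A * gauss_fun x) + S * (D`!%:R * expR A * gauss_fun x) by ring.
by apply: lerD; apply: ler_wpM2l.
Qed.

Lemma W_derive (r : {poly R}) (x : R) : is_derive x (1 : R) (W r) (W (r^`() + r * ep^`()) x).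
Proof.
have h1 : is_derive x 1 (expR \o horner ep) (expR ep.[x] * ep^`().[x]).
  exact: is_derive1_comp.
have h2 := is_deriveM (is_derive_poly r x) h1.
have -> : W r = horner r * (expR \o horner ep) by apply/funext => y.
apply: (is_derive_eq h2).
rewrite /W hornerD hornerM /GRing.scale /=; ring.
Qed.

Lemma cont_W (r : {poly R}) : continuous (W r).
Proof.
move=> x; apply: differentiable_continuous; apply/derivable1_diffP.
by have [] := W_derive r x.
Qed.

Lemma meas_W (r : {poly R}) : measurable_fun [set: R] (fun x => (W r x)%:E).
Proof. apply/measurable_EFinP; exact: continuous_measurable_fun (cont_W r). Qed.

Lemma int_W (r : {poly R}) : lebesgue_measure.-integrable setT (EFin \o W r).
Proof.
have [C HC] := poly_bound r.
have := @le_integrable _ _ _ lebesgue_measure _ measurableT (EFin \o W r) (fun x => (C%:E * (EFin \o gauss_fun) x)%E).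
apply.
- exact: meas_W.
- move=> x _ /=; rewrite lee_fin; apply: le_trans (HC x) _; exact: ler_norm.
- exact: integrableZl integrableT_gauss.
Qed.

Definition L (r : {poly R}) : R := Rintegral lebesgue_measure setT (W r).

Lemma LD p q : L (p + q) = L p + L q.
Proof.
rewrite /L -RintegralD //; [|exact: int_W|exact: int_W].
by apply: eq_Rintegral => x _; rewrite /W hornerD mulrDl.
Qed.

Lemma LZ c p : L (c *: p) = c * L p.
Proof.
rewrite /L -RintegralZl //; last exact: int_W.
by apply: eq_Rintegral => x _; rewrite /W hornerZ mulrA.
Qed.

Lemma LE (r : {poly R}) : (\int[lebesgue_measure]_(x in setT) (W r x)%:E)%E = (L r)%:E.
Proof. by rewrite /L /Rintegral fineK //; apply: integrable_fin_num => //; exact: int_W. Qed.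

Lemma wprodE p q : wprod tau t p q = (L (p * q))%:E.
Proof.
rewrite /wprod -LE; apply: eq_integral => x _.
by rewrite /W weightE hornerM.
Qed.

Lemma L1_gt0 : 0 < L 1.
Proof.
pose c0 := expR (- 1 - `|tau| - `|t|).
have c0p : 0 < c0 by rewrite expR_gt0.
have mI : measurable (`[0%R, 1%R]%classic : set R) by [].
have H : (c0%:E * lebesgue_measure (`[0%R, 1%R]%classic : set R) <= (L 1)%:E)%E.
  rewrite -LE -integral_cst //.
  apply: (@le_trans _ _ (\int[lebesgue_measure]_(x in `[0%R, 1%R]%classic) (W 1 x)%:E)%E).
    apply: ge0_le_integral => //.
    - by move=> x _ /=; rewrite lee_fin ltW.
    - apply: measurable_funS (meas_W 1) => //.
    - move=> x /=; rewrite in_itv /= => /andP[x0 x1].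
      rewrite lee_fin /W hornerC mul1r /c0 ler_expR.
      have -> : ep.[x] = - x ^+ 6 + tau * x ^+ 4 + t * x ^+ 2 by rewrite /ep !hornerE.
      have h6 : x ^+ 6 <= 1 by rewrite exprn_ile1.
      have h4 : 0 <= x ^+ 4 <= 1 by rewrite exprn_ge0 // exprn_ile1.
      have h2 : 0 <= x ^+ 2 <= 1 by rewrite exprn_ge0 // exprn_ile1.
      have t4 : - `|tau| <= tau * x ^+ 4.
        case/andP: h4 => h4a h4b.
        have : `|tau * x ^+ 4| <= `|tau| by rewrite normrM (ger0_norm h4a) ler_piMr.
        rewrite ler_norml => /andP[] //.
      have t2 : - `|t| <= t * x ^+ 2.
        case/andP: h2 => h2a h2b.
        have : `|t * x ^+ 2| <= `|t| by rewrite normrM (ger0_norm h2a) ler_piMr.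
        rewrite ler_norml => /andP[] //.
      lra.
  apply: ge0_subset_integral => //.
  - exact: meas_W.
  - by move=> x _ /=; rewrite lee_fin /W hornerC mul1r expR_ge0.
rewrite lebesgue_measure_itv /= lte01 oppr0 adde0 mule1 lee_fin in H.
exact: lt_le_trans c0p H.
Qed.

Lemma FTC_W (p : {poly R}) (a : R) : 0 < a ->
  (\int[lebesgue_measure]_(x in `[(- a)%R, a]%classic) (W (p^`() + p * ep^`()) x)%:E)%E
  = (W p a - W p (- a))%:E.
Proof.
move=> a0; rewrite EFinB; apply: continuous_FTC2.
- by rewrite -subr_gt0 opprK; lra.
- exact: continuous_subspaceT (cont_W _).
- split.
  + by move=> x _; have [] := W_derive p x.
  + by apply: cvg_at_right_filter; exact: cont_W.
  + by apply: cvg_at_left_filter; exact: cont_W.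
- move=> x _; rewrite derive1E; exact: (@derive_val _ _ _ _ _ _ _ (W_derive p x)).
Qed.

Lemma W_decay (p : {poly R}) : exists C, forall y : R, y != 0 -> `|W p y| <= C / `|y|.
Proof.
have [C HC] := poly_bound ('X * p).
exists `|C| => y y0; rewrite ler_pdivlMr ?normr_gt0 //.
have := HC y; rewrite /W hornerM hornerX -mulrA normrM mulrC => H.
apply: le_trans H _.
have g0 := gauss_fun_ge0 y; have g1 := gauss_fun_le1 y.
apply: le_trans (_ : `|C| * gauss_fun y <= _); first by rewrite ler_wpM2r // ler_norm.
by rewrite ler_piMr.
Qed.

Lemma W_lim (p : {poly R}) :
  (fun n : nat => W p n.+1%:R - W p (- n.+1%:R)) @ \oo --> (0:R).
Proof.
have [C HC] := W_decay p.
apply: (@squeeze_cvgr _ _ _ _ (fun n => - (2 * C) * harmonic n) (fun n => (2 * C) * harmonic n)).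
- apply: nearW => n.
  have a0 : 0 < n.+1%:R :> R by rewrite ltr0n.
  have h1 := HC n.+1%:R (lt0r_neq0 a0).
  have h2 := HC (- n.+1%:R); rewrite oppr_eq0 (lt0r_neq0 a0) in h2; have {}h2 := h2 isT.
  have ea : `|n.+1%:R : R| = n.+1%:R := gtr0_norm a0.
  rewrite ea in h1; rewrite normrN ea in h2.
  have : `|W p n.+1%:R - W p (- n.+1%:R)| <= 2 * C * harmonic n.
    apply: le_trans (ler_normB _ _) _.
    rewrite /harmonic /= -mulrA mulr2n mulrDl mul1r; apply: lerD => //.
  by rewrite ler_norml mulNr => /andP[-> ->].
- rewrite -(mulr0 (- (2 * C))); apply: cvgMr; exact: cvg_harmonic.
- rewrite -(mulr0 (2 * C)); apply: cvgMr; exact: cvg_harmonic.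
Qed.

Lemma L_deriv (p : {poly R}) : L (p^`() + p * ep^`()) = 0.
Proof.
set r := p^`() + p * ep^`().
pose f := fun x => (W r x)%:E.
pose D := fun n : nat => (`[(- n.+1%:R)%R, n.+1%:R]%classic : set R).
pose f_ := fun n => f \_ (D n).
have mD n : measurable (D n) by exact: measurable_itv.
have mf_ n : measurable_fun [set: R] (f_ n).
  rewrite /f_; apply/(measurable_restrictT f (mD n)).
  by apply: measurable_funS (meas_W r).
have f_f : {ae lebesgue_measure, forall x, setT x -> f_ ^~ x @ \oo --> f x}.
  apply: aeW => x _; apply: cvg_near_cst.
  near=> n; rewrite /f_ patchE mem_set //.
  rewrite /D /= in_itv /= -ler_norml.
  apply: ltW; apply: lt_le_trans (truncnS_gt `|x|) _.
  rewrite ler_nat ltnS; near: n; exact: nbhs_infty_ge.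
have ig : lebesgue_measure.-integrable setT (abse \o f).
  exact: integrable_abse (int_W r).
have f_g : {ae lebesgue_measure, forall x n, setT x -> (`|f_ n x| <= (abse \o f) x)%E}.
  apply: aeW => x n _; rewrite /f_ patchE; case: ifP => _ //=.
  by rewrite normr0 lee_fin normr_ge0.
have [_ _ cv] := @dominated_convergence _ _ _ lebesgue_measure setT measurableT f_ f (abse \o f) mf_ (meas_W r) f_f ig f_g.
have E : (fun n => (\int[lebesgue_measure]_(x in setT) f_ n x)%E)
    = (fun n => (W p n.+1%:R - W p (- n.+1%:R))%:E).
  apply/funext => n; rewrite -integral_mkcond /D FTC_W //.
rewrite E in cv.
have cv0 : (fun n => (W p n.+1%:R - W p (- n.+1%:R))%:E) @ \oo --> 0%:E.
  by apply: cvg_EFin; [exact: nearW | exact: W_lim].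
have := cvg_unique _ cv cv0.
by rewrite /L /Rintegral => ->.
Unshelve. all: by end_near.
Qed.

End Ana.

Lemma ep_deriv (R : realType) (tau t : R) : (ep _ tau t)^`() = Qp _ tau t.
Proof.
rewrite /ep /Qp !derivD derivN !derivZ !derivXn /= expr1.
rewrite scaleNr scaler_nat -!scalerA !scaler_nat !scalerMnl.
by rewrite -!scalerMnr !scalerMnl.
Qed.

Theorem lemma3p1 (R : realType) (tau t : R) (P : nat -> {poly R}) (beta : nat -> R) :
  P 0%N = 1 ->
  beta 0%N = 0 ->
  (forall n : nat, P n.+1 = 'X * P n - beta n *: P n.-1) ->
  (forall n : nat, (1 <= n)%N -> 0 < beta n) ->
  orthogonal_family tau t P ->
  forall n : nat, (1 <= n)%N ->
    6 * beta n * (beta (n - 2)%N * beta (n - 1)%N + beta (n - 1)%N ^+ 2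
                  + 2 * beta (n - 1)%N * beta n + beta (n - 1)%N * beta n.+1
                  + beta n ^+ 2 + 2 * beta n * beta n.+1 + beta n.+1 ^+ 2
                  + beta n.+1 * beta n.+2)
    - 4 * tau * beta n * (beta (n - 1)%N + beta n + beta n.+1)
    - 2 * t * beta n = n%:R.
Proof.
move=> P0 b0 Prec bpos orthF n n1.
have bnz : forall k, (1 <= k)%N -> beta k != 0.
  by move=> k k1; rewrite lt0r_neq0 // bpos.
have orth : forall a b : nat, a <> b -> L _ tau t (P a * P b) = 0.
  move=> a b ab; have := orthF a b ab; rewrite wprodE => -[] //.
have L1 : L _ tau t 1 != 0 by rewrite lt0r_neq0 // (L1_gt0 _ tau t).
have LQ : forall p, L _ tau t (p^`() + p * Qp _ tau t) = 0.
  by move=> p; rewrite -ep_deriv (L_deriv _ tau t).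
exact: (@main_alg R tau t (L _ tau t) P beta (LD _ tau t) (LZ _ tau t) P0 b0 Prec bnz orth L1 LQ n n1).
Qed.
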